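(* Let $m,n$ be natural numbers with $\gcd(m,n)=1$. Then the lattice $\mathcal{J}_{mn}$ is isomorphic to the direct product of lattices $\mathcal{J}_m\times\mathcal{J}_n$.
   Context: For a natural number $k$, $\mathbb{Z}_k=\{0,\dots,k-1\}$. $P(\mathbb{Z}_k,+)$ denotes the clone of all polynomial operations of the group $(\mathbb{Z}_k,+)$ (operations of the form $a_0+a_1x_1+\dots+a_sx_s$), and $P(\mathbb{Z}_k,+,\cdot)$ denotes the clone of all polynomial operations of the ring $(\mathbb{Z}_k,+,\cdot)$. $\mathcal{J}_k$ denotes the interval $[P(\mathbb{Z}_k,+),P(\mathbb{Z}_k,+,\cdot)]$ in the lattice of all clones on the set $\mathbb{Z}_k$, i.e. the lattice of all clones $C$ with $P(\mathbb{Z}_k,+)\subseteq C\subseteq P(\mathbb{Z}_k,+,\cdot)$. *)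

(* Defs.v *)
From HB Require Import structures.
From mathcomp Require Import all_boot all_order all_algebra.
From mathcomp Require Import mpoly.
Set Implicit Arguments. Unset Strict Implicit. Unset Printing Implicit Defensive.
Import GRing.Theory.

(* Z_k = {0,...,k-1} is represented by the ordinal type 'I_k.
   An n-ary operation on Z_k. *)
Definition op (k n : nat) : Type := ('I_n -> 'I_k) -> 'I_k.

Definition opset (k : nat) : Type := forall n : nat, op k n -> Prop.

Definition comp_op (k n m : nat) (f : op k n) (g : 'I_n -> op k m) : op k m :=
  fun x => f (fun i => g i x).

Definition is_clone (k : nat) (C : opset k) : Prop :=
  [/\ forall f : op k 0, ~ C 0 f,
      forall n (i : 'I_n), C n (fun x => x i) &
      forall n m (f : op k n) (g : 'I_n -> op k m),
        C n f -> (forall i, C m (g i)) -> C m (comp_op f g)].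

Definition opset_sub (k : nat) (C D : opset k) : Prop :=
  forall n (f : op k n), C n f -> D n f.

Definition Pgroup (k : nat) : opset k :=
  fun n f => 0 < n /\ exists (a0 : nat) (a : 'I_n -> nat),
    forall x : 'I_n -> 'I_k,
      nat_of_ord (f x) = (a0 + \sum_(i < n) a i * x i) %% k.

Definition Pring (k : nat) : opset k :=
  fun n f => 0 < n /\ exists p : {mpoly int[n]},
    forall x : 'I_n -> 'I_k,
      (nat_of_ord (f x) : int) = (p.@[fun i => (nat_of_ord (x i) : int)] %% k)%Z.

Definition J (k : nat) : Type :=
  { C : opset k | is_clone C /\ opset_sub (@Pgroup k) C /\ opset_sub C (@Pring k) }.

Definition J_le (k : nat) (C D : J k) : Prop := opset_sub (sval C) (sval D).

(* Lattice isomorphism J_a ~= J_b x J_c (componentwise order on the product),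
   expressed as an order isomorphism: a bijection preserving and reflecting
   the order (for lattices this is the same as a lattice isomorphism). *)
Definition J_iso_prod (a b c : nat) : Prop :=
  exists phi : J a -> J b * J c,
    bijective phi /\
    forall C D : J a,
      J_le C D <-> (J_le (phi C).1 (phi D).1 /\ J_le (phi C).2 (phi D).2).

(* Main.v *)
Require Import Defs.
From mathcomp Require Import all_boot all_order all_algebra.
From mathcomp Require Import mpoly.
From Stdlib Require Import ProofIrrelevance FunctionalExtensionality PropExtensionality IndefiniteDescription.
Set Implicit Arguments. Unset Strict Implicit. Unset Printing Implicit Defensive.
Import GRing.Theory.

Section T1S.

Local Open Scope ring_scope.

Lemma modz_dvdk (u : int) (k d : nat) : (d %| k)%N -> modz (modz u k) d = modz u d.
Proof.
move=> Hdk; apply/eqP; rewrite eqz_mod_dvd.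
have -> : (u %% k)%Z - u = - ((u %/ k)%Z * k).
  by rewrite {2}(divz_eq u k); rewrite opprD addrCA subrr addr0.
rewrite rpredN; apply: dvdz_mull; by rewrite dvdzE.
Qed.

Lemma cong_eval a (p : {mpoly int[a]}) (d : int) (x x' : 'I_a -> int) :
  (forall i, (x i = x' i %[mod d])%Z) -> (p.@[x] = p.@[x'] %[mod d])%Z.
Proof.
move=> H; rewrite !mevalE.
apply: (big_ind2 (fun u v => (u = v %[mod d])%Z)) => //.
  by move=> u1 u2 v1 v2 e1 e2; rewrite -modzDm e1 e2 modzDm.
move=> mm _.
have h : ((\prod_i x i ^+ mm i) = (\prod_i x' i ^+ mm i) %[mod d])%Z.
  apply: (big_ind2 (fun u v => (u = v %[mod d])%Z)) => //.
    by move=> u1 u2 v1 v2 e1 e2; rewrite -modzMm e1 e2 modzMm.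
  by move=> i _; rewrite -modzXm H modzXm.
by rewrite -modzMmr h modzMmr.
Qed.

End T1S.


Section Red.
Variables (k d : nat) (Hd : (0 < d)%N) (Hk : (0 < k)%N) (Hdk : (d %| k)%N).

Definition liftv a (y : 'I_a -> 'I_d) : 'I_a -> 'I_k :=
  fun i => widen_ord (dvdn_leq Hk Hdk) (y i).
Definition modv a (x : 'I_a -> 'I_k) : 'I_a -> 'I_d :=
  fun i => Ordinal (ltn_pmod (x i) Hd).
Definition red a (f : op k a) : op d a :=
  fun y => Ordinal (ltn_pmod (f (liftv y)) Hd).

Lemma red_spec a (f : op k a) : @Pring k a f -> forall x, (red f (modv x) : nat) = f x %% d.
Proof.
case=> _ [p Hp] x; rewrite /red /=.
apply/eqP; rewrite -(eqz_nat) -!modz_nat !Hp !modz_dvdk //; apply/eqP.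
apply: cong_eval => i /=.
by rewrite modz_nat modz_nat modn_mod.
Qed.

Lemma red_Pring a (f : op k a) : @Pring k a f -> @Pring d a (red f).
Proof.
case=> Ha [p Hp]; split => //; exists p => y /=.
by rewrite -modz_nat Hp modz_dvdk.
Qed.

Lemma red_Pgroup a (f : op k a) : @Pgroup k a f -> @Pgroup d a (red f).
Proof.
case=> Ha [a0 [c Hc]]; split => //; exists a0, c => y /=.
by rewrite Hc modn_dvdm.
Qed.

Lemma lift_Pgroup a (g : op d a) : @Pgroup d a g -> exists f, @Pgroup k a f /\ red f = g.
Proof.
case=> Ha [a0 [c Hc]].
exists (fun x => Ordinal (ltn_pmod (a0 + \sum_(i < a) c i * x i)%N Hk)); split.
  by split => //; exists a0, c.
apply: functional_extensionality => y; apply: val_inj => /=.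
by rewrite modn_dvdm // Hc.
Qed.

Lemma red_comp a b (f : op k a) (g : 'I_a -> op k b) :
  @Pring k a f -> (forall i, @Pring k b (g i)) ->
  red (comp_op f g) = comp_op (red f) (fun i => red (g i)).
Proof.
move=> Hf Hg; apply: functional_extensionality => y; apply: val_inj.
rewrite /comp_op /=.
have -> : (fun i => red (g i) y) = modv (fun i => g i (liftv y)).
  by apply: functional_extensionality => i; apply: val_inj.
exact: esym (red_spec Hf _).
Qed.

Lemma red_proj a (i : 'I_a) : red (fun x => x i) = (fun y => y i).
Proof.
apply: functional_extensionality => y; apply: val_inj => /=.
by rewrite modn_small.
Qed.

Definition proj (C : opset k) : opset d := fun a g => exists f, C a f /\ red f = g.

Lemma proj_clone (C : opset k) :
  is_clone C -> opset_sub (@Pgroup k) C -> opset_sub C (@Pring k) ->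
  [/\ is_clone (proj C), opset_sub (@Pgroup d) (proj C) & opset_sub (proj C) (@Pring d)].
Proof.
case=> C0 Cp Cc Cg Cr; split.
- split.
  + by move=> g [f [Hf _]]; exact: (C0 f).
  + by move=> a i; exists (fun x => x i); split => //; rewrite red_proj.
  + move=> a b g h [f [Hf <-]] Hh.
    pose G i := proj1_sig (constructive_indefinite_description _ (Hh i)).
    have HG i : C b (G i) /\ red (G i) = h i := proj2_sig (constructive_indefinite_description _ (Hh i)).
    exists (comp_op f G); split.
      by apply: Cc => // i; case: (HG i).
    rewrite red_comp //; last by move=> i; apply: Cr; case: (HG i).
    - congr comp_op; apply: functional_extensionality => i; by case: (HG i).
    - exact: Cr.
- move=> a g /lift_Pgroup [f [Hf <-]]; exists f; split => //; exact: Cg.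
- by move=> a g [f [Hf <-]]; apply: red_Pring; apply: Cr.
Qed.

End Red.


Lemma Pring_proj k a (i : 'I_a) : @Pring k a (fun x => x i).
Proof.
split; first by case: i => [j /= Hj]; apply: leq_ltn_trans Hj.
exists 'X_i => x; rewrite mevalXU modz_nat modn_small //.
Qed.

Lemma Pgroup_Pring k a (f : op k a) : @Pgroup k a f -> @Pring k a f.
Proof.
case=> Ha [a0 [c Hc]]; split => //.
exists ((a0%:Z)%:MP + \sum_(i < a) (c i)%:Z *: 'X_i)%R => x.
rewrite Hc -modz_nat mevalD mevalC raddf_sum /=; congr (modz _ _).
rewrite PoszD; congr (_ + _)%R.
rewrite (big_morph Posz PoszD (erefl _)); apply: eq_bigr => i _.
by rewrite mevalZ mevalXU PoszM.
Qed.

Lemma Pring_comp k a b (f : op k a) (g : 'I_a -> op k b) :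
  @Pring k a f -> (forall i, @Pring k b (g i)) -> (0 < b)%N -> @Pring k b (comp_op f g).
Proof.
case=> Ha [p Hp] Hg Hb.
pose q i := proj1_sig (constructive_indefinite_description _ (proj2 (Hg i))).
have Q i : forall x, (g i x : int) = modz (q i).@[fun j => (x j : int)] k :=
  proj2_sig (constructive_indefinite_description _ (proj2 (Hg i))).
split => //; exists (p \mPo [tuple q i | i < a]) => x.
rewrite /comp_op Hp comp_mpoly_meval.
apply: cong_eval => i; rewrite tnth_mktuple Q.
exact: modz_mod.
Qed.


Section KS.
Variables (k d1 d2 : nat) (H1 : (0 < d1)%N) (H2 : (0 < d2)%N) (Hk : (0 < k)%N)
  (H1k : (d1 %| k)%N) (H2k : (d2 %| k)%N) (Hkeq : k = (d1 * d2)%N) (Hcop : coprime d1 d2).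

Definition e1 := chinese d1 d2 1 0.
Lemma e1_1 : e1 = 1 %[mod d1]. Proof. exact: chinese_modl. Qed.
Lemma e1_2 : e1 = 0 %[mod d2]. Proof. exact: chinese_modr. Qed.

Definition zero_op d (Hd : (0 < d)%N) a : op d a := fun _ => Ordinal Hd.

Lemma zero_Pgroup d (Hd : (0 < d)%N) a : (0 < a)%N -> @Pgroup d a (@zero_op _ Hd a).
Proof.
move=> Ha; split => //; exists 0%N, (fun _ => 0%N) => x /=.
by rewrite big1 ?mod0n.
Qed.

Lemma key_surj a (g : op d1 a) : @Pring d1 a g ->
  exists f : op k a, [/\ @Pring k a f, red H1 Hk H1k f = g & red H2 Hk H2k f = @zero_op _ H2 a].
Proof.
move=> Hg; case: (Hg) => Ha [q Hq].
exists (fun x => Ordinal (ltn_pmod (e1 * g (modv H1 x)) Hk)); split.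
- split => //; exists ((e1%:Z) *: q)%R => x /=.
  rewrite -modz_nat mevalZ; apply/eqP; rewrite eqz_mod_dvd PoszM -mulrBr.
  have -> : Posz k = (Posz d2 * Posz d1)%R by rewrite Hkeq mulnC PoszM.
  apply: dvdz_mul.
    by rewrite dvdzE /= /dvdn e1_2 mod0n.
  rewrite -eqz_mod_dvd Hq; apply/eqP; rewrite modz_mod.
  apply: cong_eval => i /=; by rewrite modz_nat modz_nat modn_mod.
- apply: functional_extensionality => y; apply: val_inj => /=.
  have -> : modv H1 (liftv Hk H1k y) = y.
    by apply: functional_extensionality => i; apply: val_inj => /=; rewrite modn_small.
  by rewrite modn_dvdm // -modnMml e1_1 modnMml mul1n modn_small.
- apply: functional_extensionality => y; apply: val_inj => /=.
  rewrite modn_dvdm //; apply/eqP; apply: dvdn_mulr; by rewrite /dvdn e1_2 mod0n.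
Qed.


End KS.

Section Main.
Variables (k d1 d2 : nat) (H1 : (0 < d1)%N) (H2 : (0 < d2)%N) (Hk : (0 < k)%N)
  (H1k : (d1 %| k)%N) (H2k : (d2 %| k)%N) (Hkeq : k = (d1 * d2)%N) (Hcop : coprime d1 d2).

Lemma crt_eq (u v : nat) : u = v %[mod d1] -> u = v %[mod d2] -> u = v %[mod k].
Proof.
move=> A B; rewrite Hkeq; apply/eqP; rewrite chinese_remainder //.
by rewrite A B !eqxx.
Qed.

Lemma mix_mod1 (d e e' u v : nat) : e = 1 %[mod d] -> e' = 0 %[mod d] ->
  e * u + e' * v = u %[mod d].
Proof.
move=> E E'; rewrite -modnDm -modnMml E modnMml -(modnMml e') E' mod0n mul0n.
by rewrite mod0n addn0 mul1n modn_mod.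
Qed.

Notation r1 := (red H1 Hk H1k).
Notation r2 := (red H2 Hk H2k).
Notation p1 := (proj H1 Hk H1k).
Notation p2 := (proj H2 Hk H2k).

Lemma recon (C : opset k) : is_clone C -> opset_sub (@Pgroup k) C -> opset_sub C (@Pring k) ->
  forall a (f : op k a), @Pring k a f -> p1 C (r1 f) -> p2 C (r2 f) -> C a f.
Proof.
case=> C0 Cp Cc Cg Cr a f Hf [g [Hg eg]] [h [Hh eh]].
pose e1 := chinese d1 d2 1 0.
pose e2 := chinese d1 d2 0 1.
pose c := fun i : 'I_2 => if i == ord0 then e1 else e2.
pose s : op k 2 := fun z => Ordinal (ltn_pmod (\sum_(i < 2) c i * z i) Hk).
have Hs : @Pgroup k 2 s by split => //; exists 0%N, c.
pose G := fun i : 'I_2 => if i == ord0 then g else h.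
have -> : f = comp_op s G.
  apply: functional_extensionality => x; apply: val_inj.
  rewrite /comp_op /= !big_ord_recl big_ord0 /= addn0.
  rewrite -(modn_small (ltn_ord (f x))).
  rewrite /c /G /=; apply: crt_eq.
    rewrite mix_mod1; [|exact: chinese_modl|exact: chinese_modl].
    by rewrite -(red_spec H1 Hk H1k (Cr _ _ Hg)) eg red_spec.
  rewrite addnC mix_mod1; [|exact: chinese_modr|exact: chinese_modr].
  by rewrite -(red_spec H2 Hk H2k (Cr _ _ Hh)) eh red_spec.
apply: Cc; first exact: Cg.
by move=> i; rewrite /G; case: ifP.
Qed.

Definition psiC (A : opset d1) (B : opset d2) : opset k :=
  fun a f => @Pring k a f /\ A a (r1 f) /\ B a (r2 f).

Definition Jp d (C : opset d) := [/\ is_clone C, opset_sub (@Pgroup d) C & opset_sub C (@Pring d)].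

Lemma psi_J A B : Jp A -> Jp B -> Jp (psiC A B).
Proof.
case=> [[A0 Ap Ac] Ag Ar] [[B0 Bp Bc] Bg Br]; split.
- split.
  + by move=> f [[]].
  + move=> a i; split; first exact: Pring_proj.
    by rewrite (red_proj H1 Hk H1k) (red_proj H2 Hk H2k); split; [apply: Ap | apply: Bp].
  + move=> a b f g [Pf [Af Bf]] Hg.
    have Ha : (0 < a)%N by case: Pf.
    have Hb : (0 < b)%N by case: (Hg (Ordinal Ha)) => [[]].
    have Pg i : @Pring k b (g i) by case: (Hg i).
    split; first by apply: Pring_comp.
    rewrite (red_comp H1 Hk H1k) // (red_comp H2 Hk H2k) //; split.
      by apply: Ac => // i; case: (Hg i) => _ [].
    by apply: Bc => // i; case: (Hg i) => _ [].
- move=> a f Hf; split; first exact: Pgroup_Pring.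
  by split; [apply: Ag | apply: Bg]; apply: red_Pgroup.
- by move=> a f [].
Qed.

Lemma opset_ext d (C D : opset d) : (forall a f, C a f <-> D a f) -> C = D.
Proof.
move=> H; apply: functional_extensionality_dep => a.
apply: functional_extensionality => f; apply: propositional_extensionality; exact: H.
Qed.

Lemma J_eq d (C D : J d) : sval C = sval D -> C = D.
Proof.
case: C => C HC; case: D => D HD /= E; subst D; f_equal; apply: proof_irrelevance.
Qed.

Lemma JpE d (C : J d) : Jp (sval C).
Proof. by case: C => C [? [? ?]]. Qed.

Definition ofJp d (C : opset d) (H : Jp C) : J d :=
  exist _ C (let: And3 a b c := H in conj a (conj b c)).

Lemma proj_Jp d (Hd : (0 < d)%N) (Hdk : (d %| k)%N) (C : opset k) :
  Jp C -> Jp (proj Hd Hk Hdk C).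
Proof. by case=> a b c; apply: proj_clone. Qed.

Definition phi (C : J k) : J d1 * J d2 :=
  (ofJp (proj_Jp H1 H1k (JpE C)), ofJp (proj_Jp H2 H2k (JpE C))).

Definition psi (P : J d1 * J d2) : J k := ofJp (psi_J (JpE P.1) (JpE P.2)).

Lemma iso : J_iso_prod k d1 d2.
Proof.
exists phi; split.
  exists psi.
  - move=> C; apply: J_eq; apply: opset_ext => a f /=.
    case: (JpE C) => Cc Cg Cr; split.
      by case=> Pf [A1 A2]; apply: recon.
    move=> Hf; split; first exact: Cr.
    by split; exists f.
  - case=> A B; congr pair; apply: J_eq; apply: opset_ext => a g /=.
    + split; first by case=> f [[_ []]] ? _ <-.
      move=> Ag; have Pg : @Pring d1 a g by case: (JpE A) => _ _; apply.
      case: (key_surj H1 H2 Hk H1k H2k Hkeq Hcop Pg) => f [Pf e1f e2f]; exists f; split => //.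
      split => //; rewrite e1f e2f; split => //.
      case: (JpE B) => _ Bg _; apply: Bg; apply: zero_Pgroup; by case: Pg.
    + split; first by case=> f [[_ []]] _ ? <-.
      move=> Bg'; have Pg : @Pring d2 a g by case: (JpE B) => _ _; apply.
      have Hc' : coprime d2 d1 by rewrite coprime_sym.
      have Hk' : k = (d2 * d1)%N by rewrite mulnC.
      case: (key_surj H2 H1 Hk H2k H1k Hk' Hc' Pg) => f [Pf e2f e1f].
      exists f; split => //.
      split => //; rewrite e1f e2f; split => //.
      case: (JpE A) => _ Ag _; apply: Ag; apply: zero_Pgroup; by case: Pg.
move=> C D; split.
  move=> Hle; split => a g /= [f [Cf <-]]; exists f; split => //; exact: Hle.
case=> L1 L2 a f Cf.
case: (JpE C) => _ _ Cr; case: (JpE D) => Dc Dg Dr.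
apply: recon => //; first exact: Cr.
  by apply: L1; exists f.
by apply: L2; exists f.
Qed.

End Main.


Definition C1 : opset 1 := fun a _ => (0 < a)%N.

Lemma C1_Jp : Jp C1.
Proof.
split.
- split.
  + by [].
  + by move=> a i; case: i => j /= Hj; rewrite /C1; apply: leq_ltn_trans Hj.
  + move=> a b f g Hf Hg; exact: (Hg (Ordinal Hf)).
- by move=> a f [].
- move=> a f Ha; split => //; exists 0%R => x.
  by rewrite meval0 mod0z; case: (f x) => [[|j] //].
Qed.

Definition J1 : J 1 := ofJp C1_Jp.

Lemma J1_unique (C : J 1) : C = J1.
Proof.
apply: J_eq; apply: opset_ext => a f /=; rewrite /C1.
case: (JpE C) => [[C0 Cp Cc] Cg Cr]; split.
  by case/Cr.
move=> Ha; apply: Cg; split => //; exists 0%N, (fun _ => 0%N) => x.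
by rewrite big1 // ?mod0n; case: (f x) => [[|j] //].
Qed.

Lemma iso_k1 k : J_iso_prod k k 1.
Proof.
exists (fun C => (C, J1)); split.
  exists fst => //; case=> C D /=; by rewrite (J1_unique D).
move=> C D /=; split; first by move=> H; split => //.
by case.
Qed.

Lemma iso_1k k : J_iso_prod k 1 k.
Proof.
exists (fun C => (J1, C)); split.
  exists snd => //; case=> C D /=; by rewrite (J1_unique C).
move=> C D /=; split; first by move=> H; split => //.
by case.
Qed.

Theorem lemma1p1 (m n : nat) (Hcop : coprime m n) : J_iso_prod (m * n) m n.
Proof.
case: m Hcop => [|m'] Hcop.
  by rewrite /coprime gcd0n in Hcop; move/eqP: Hcop => ->; exact: iso_k1.
case: n Hcop => [|n'] Hcop.
  by rewrite /coprime gcdn0 in Hcop; move/eqP: Hcop => [->]; exact: iso_1k.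
apply: (iso (d1 := m'.+1) (d2 := n'.+1)) => //.
- exact: dvdn_mulr.
- exact: dvdn_mull.
Qed.
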